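(* Let $\mathcal{H}$ be a complex Hilbert space and $B,C\in\mathcal{B}(\mathcal{H})$. If $$w^2\left(\begin{bmatrix}0 & B\\ C & 0\end{bmatrix}\right)=\frac14\max\left\{\big\||B|^2+|C^*|^2\big\|,\ \big\||B^*|^2+|C|^2\big\|\right\},$$ then $\|B+C^*\|=\|B-C^*\|$.
   Context: $\mathcal{B}(\mathcal{H})$ is the algebra of bounded linear operators on $\mathcal{H}$ with operator norm $\|\cdot\|$. For $A\in\mathcal{B}(\mathcal{H})$, $A^*$ is the adjoint, $|A|=(A^*A)^{1/2}$, $|A^*|=(AA^* )^{1/2}$, and $w(A)=\sup_{\|x\|=1}|\langle Ax,x\rangle|$ is the numerical radius. The operator matrix $\begin{bmatrix}A&B\\C&D\end{bmatrix}$ acts on $\mathcal{H}\oplus\mathcal{H}$ by $(x_1,x_2)\mapsto(Ax_1+Bx_2,\,Cx_1+Dx_2)$; $0$ denotes the zero operator. *)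

(* Defs.v *)
From mathcomp Require Import all_boot all_order all_algebra.
From mathcomp Require Import classical_sets reals complex.
Set Implicit Arguments. Unset Strict Implicit. Unset Printing Implicit Defensive.
Import Order.TTheory GRing.Theory Num.Theory.
Local Open Scope ring_scope.
Local Open Scope complex_scope.
Local Open Scope classical_set_scope.

Section Hilbert.
Variable R : realType.

Definition cmod (z : R[i]) : R :=
  Num.sqrt (complex.Re z ^+ 2 + complex.Im z ^+ 2).

Definition is_inner_product (V : lmodType R[i]) (ip : V -> V -> R[i]) : Prop :=
  [/\ (forall (a : R[i]) (x y z : V), ip (a *: x + y) z = a * ip x z + ip y z),
      (forall x y : V, ip y x = (ip x y)^*),
      (forall x : V, 0 <= complex.Re (ip x x) /\ complex.Im (ip x x) = 0)
    & (forall x : V, ip x x = 0 -> x = 0)].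

Definition ipnorm (T : Type) (ip : T -> T -> R[i]) (x : T) : R :=
  Num.sqrt (complex.Re (ip x x)).

Definition ip_complete (V : lmodType R[i]) (ip : V -> V -> R[i]) : Prop :=
  forall u : nat -> V,
    (forall e : R, 0 < e -> exists N : nat, forall m n : nat,
        (N <= m)%N -> (N <= n)%N -> ipnorm ip (u m - u n) < e) ->
    exists l : V, forall e : R, 0 < e -> exists N : nat, forall n : nat,
        (N <= n)%N -> ipnorm ip (u n - l) < e.

Definition is_complex_Hilbert (V : lmodType R[i]) (ip : V -> V -> R[i]) : Prop :=
  is_inner_product ip /\ ip_complete ip.

Definition is_bounded_op (V : lmodType R[i]) (ip : V -> V -> R[i]) (T : V -> V) : Prop :=
  (forall (a : R[i]) (x y : V), T (a *: x + y) = a *: T x + T y) /\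
  exists M : R, forall x : V, ipnorm ip (T x) <= M * ipnorm ip x.

Definition is_adjoint (V : Type) (ip : V -> V -> R[i]) (T Ts : V -> V) : Prop :=
  forall x y : V, ip (T x) y = ip x (Ts y).

Definition opnorm (V : Type) (ip : V -> V -> R[i]) (T : V -> V) : R :=
  sup [set ipnorm ip (T x) | x in [set x | ipnorm ip x <= 1]].

Definition numrad (V : Type) (ip : V -> V -> R[i]) (A : V -> V) : R :=
  sup [set cmod (ip (A x) x) | x in [set x | ipnorm ip x = 1]].

Definition ip_sum (V : Type) (ip : V -> V -> R[i]) (z w : V * V) : R[i] :=
  ip z.1 w.1 + ip z.2 w.2.

(* the operator matrix [[A, B], [C, D]] acting on H (+) H *)
Definition opmx (V : zmodType) (A B C D : V -> V) (z : V * V) : V * V :=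
  (A z.1 + B z.2, C z.1 + D z.2).

End Hilbert.

(* Main.v *)
Require Import Defs.

From mathcomp Require Import all_boot all_order all_algebra.
From mathcomp Require Import classical_sets reals complex.
From mathcomp Require Import ring lra.
From mathcomp Require Import boolp.
Set Implicit Arguments. Unset Strict Implicit. Unset Printing Implicit Defensive.
Import Order.TTheory GRing.Theory Num.Theory.
Local Open Scope ring_scope.
Local Open Scope complex_scope.
Local Open Scope classical_set_scope.

Section Cx.
Variable R : realType.
Implicit Types c d : R[i].
Local Notation Re := complex.Re.
Local Notation Im := complex.Im.
Lemma ReD c d : Re (c + d) = Re c + Re d. Proof. by case: c; case: d. Qed.
Lemma ImD c d : Im (c + d) = Im c + Im d. Proof. by case: c; case: d. Qed.
Lemma ReN c : Re (- c) = - Re c. Proof. by case: c. Qed.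
Lemma ImN c : Im (- c) = - Im c. Proof. by case: c. Qed.
Lemma ReB c d : Re (c - d) = Re c - Re d. Proof. by rewrite ReD ReN. Qed.
Lemma ReJ c : Re (conjc c) = Re c. Proof. by case: c. Qed.
Lemma ReMr (t : R) c : Re (t%:C * c) = t * Re c.
Proof. case: c => a b /=; ring. Qed.
Lemma ImMr (t : R) c : Im (t%:C * c) = t * Im c.
Proof. case: c => a b /=; ring. Qed.
Lemma ImMi c : Im ('i * c) = Re c. Proof. case: c => a b /=; ring. Qed.
Lemma ImMJi c : Im ((conjc 'i) * c) = - Re c. Proof. case: c => a b /=; ring. Qed.
Lemma ReMJi c : Re ((conjc 'i) * c) = Im c. Proof. case: c => a b /=; ring. Qed.
Lemma iJi : 'i * (conjc 'i) = 1 :> R[i].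
Proof. apply/eqP; rewrite eq_complex /=; apply/andP; split; apply/eqP; ring. Qed.
Lemma realJ (t : R) : conjc (t%:C) = t%:C. Proof. by rewrite /= oppr0. Qed.
End Cx.

Section IP.
Variable R : realType.
Variable V : lmodType R[i].
Variable ip : V -> V -> R[i].
Hypothesis Hip : is_inner_product ip.
Local Notation Re := complex.Re.
Local Notation Im := complex.Im.
Local Notation n := (ipnorm ip).

Let H1 : forall (a : R[i]) (x y z : V), ip (a *: x + y) z = a * ip x z + ip y z.
Proof. by case: Hip. Qed.
Let H2 : forall x y : V, ip y x = conjc (ip x y).
Proof. by case: Hip. Qed.
Let H3 : forall x : V, 0 <= Re (ip x x) /\ Im (ip x x) = 0.
Proof. by case: Hip. Qed.
Let H4 : forall x : V, ip x x = 0 -> x = 0.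
Proof. by case: Hip. Qed.

Lemma realJ' (t : R) : conjc (t%:C) = t%:C.
Proof. by rewrite /real_complex_def /= oppr0. Qed.
Lemma ReMr' (t : R) (c : R[i]) : Re (t%:C * c) = t * Re c.
Proof. case: c => a b; rewrite /real_complex_def /=; ring. Qed.

Lemma ip0l z : ip 0 z = 0.
Proof.
have := H1 1 0 0 z; rewrite scaler0 add0r mul1r => e.
by apply: (addrI (ip 0 z)); rewrite addr0 -e.
Qed.
Lemma ipDl x y z : ip (x + y) z = ip x z + ip y z.
Proof. by have := H1 1 x y z; rewrite scale1r mul1r. Qed.
Lemma ipZl a x z : ip (a *: x) z = a * ip x z.
Proof. by have := H1 a x 0 z; rewrite addr0 ip0l addr0. Qed.
Lemma ipNl x z : ip (- x) z = - ip x z.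
Proof. by rewrite -scaleN1r ipZl mulN1r. Qed.
Lemma ipBl x y z : ip (x - y) z = ip x z - ip y z.
Proof. by rewrite ipDl ipNl. Qed.
Lemma ipDr z x y : ip z (x + y) = ip z x + ip z y.
Proof. by rewrite [LHS]H2 [ip z x]H2 [ip z y]H2 ipDl; apply: rmorphD. Qed.
Lemma ipZr z a x : ip z (a *: x) = conjc a * ip z x.
Proof. by rewrite [LHS]H2 [ip z x]H2 ipZl; apply: rmorphM. Qed.
Lemma ipNr z x : ip z (- x) = - ip z x.
Proof. by rewrite [LHS]H2 [ip z x]H2 ipNl; apply: rmorphN. Qed.
Lemma ipBr z x y : ip z (x - y) = ip z x - ip z y.
Proof. by rewrite ipDr ipNr. Qed.
Lemma ip0r z : ip z 0 = 0.
Proof. by rewrite H2 ip0l; apply: conjc0. Qed.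
Lemma Re_sym x y : Re (ip y x) = Re (ip x y).
Proof. by rewrite H2 ReJ. Qed.

Lemma n_ge0 x : 0 <= n x. Proof. exact: sqrtr_ge0. Qed.
Lemma n2 x : n x ^+ 2 = Re (ip x x).
Proof. by rewrite /ipnorm sqr_sqrtr //; case: (H3 x). Qed.
Lemma n0 : n 0 = 0.
Proof. by rewrite /ipnorm ip0l sqrtr0. Qed.
Lemma n_eq0 x : n x = 0 -> x = 0.
Proof.
move=> e; apply: H4; have := n2 x; rewrite e expr0n /= => e2.
case: (H3 x) => _ ei; move: e2 ei; case: (ip x x) => a b /= <- ->; by [].
Qed.
Lemma ReZZ (t : R) x : Re (ip (t%:C *: x) (t%:C *: x)) = t ^+ 2 * Re (ip x x).
Proof. rewrite ipZl ipZr; case: (ip x x) => a b; rewrite /real_complex_def /=; ring. Qed.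
Lemma nZ (t : R) x : 0 <= t -> n (t%:C *: x) = t * n x.
Proof.
by move=> t0; rewrite /ipnorm ReZZ sqrtrM ?sqrtr_sqr ?ger0_norm // sqr_ge0.
Qed.
Lemma ni x : n ('i *: x) = n x.
Proof. by rewrite /ipnorm ipZl ipZr mulrA iJi mul1r. Qed.

Lemma expand x y (t : R) :
  Re (ip (x + t%:C *: y) (x + t%:C *: y)) =
  n x ^+ 2 + 2 * t * Re (ip x y) + t ^+ 2 * n y ^+ 2.
Proof.
rewrite ipDl !ipDr !ReD ReZZ ipZl ipZr realJ' !ReMr' Re_sym -!n2; ring.
Qed.

Lemma CS x y : Re (ip x y) <= n x * n y.
Proof.
have [/n_eq0 ->|nx0] := eqVneq (n x) 0; first by rewrite ip0l n0 mul0r.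
have [/n_eq0 ->|ny0] := eqVneq (n y) 0; first by rewrite ip0r n0 mulr0.
have px : 0 < n x by rewrite lt0r nx0 n_ge0.
have py : 0 < n y by rewrite lt0r ny0 n_ge0.
set t := - (n x / n y).
have tc : t * n y = - n x by rewrite /t mulNr divfK.
have := expand x y t; case: (H3 (x + t%:C *: y)) => + _ => le e; rewrite e in le.
have e2 : t ^+ 2 * n y ^+ 2 = n x ^+ 2 by rewrite -exprMn tc sqrrN.
rewrite e2 in le.
have : 0 <= n y * (n x ^+ 2 + 2 * t * Re (ip x y) + n x ^+ 2)
  by rewrite mulr_ge0 // ltW.
have -> : n y * (n x ^+ 2 + 2 * t * Re (ip x y) + n x ^+ 2) =
   2 * n x * (n x * n y - Re (ip x y)).
  transitivity (2 * n y * n x ^+ 2 + 2 * (t * n y) * Re (ip x y)); first by ring.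
  by rewrite tc; ring.
by rewrite pmulr_rge0 ?subr_ge0 // mulr_gt0.
Qed.

Lemma CSabs x y : `|Re (ip x y)| <= n x * n y.
Proof.
have nN : n (- x) = n x by rewrite /ipnorm ipNl ipNr opprK.
by rewrite ler_norml CS andbT lerNl -ReN -ipNl -nN CS.
Qed.

Lemma CSim x y : `|Im (ip x y)| <= n x * n y.
Proof.
have : Re (ip x ('i *: y)) = Im (ip x y) by rewrite ipZr ReMJi.
by move=> <-; rewrite -(ni y) CSabs.
Qed.

Lemma sq_le (a b : R) : 0 <= a -> 0 <= b -> a ^+ 2 <= b ^+ 2 -> a <= b.
Proof. by move=> a0 b0; rewrite ler_sqr ?nnegrE. Qed.

Lemma ntri x y : n (x + y) <= n x + n y.
Proof.
apply: sq_le; rewrite ?addr_ge0 ?n_ge0 //.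
have := expand x y 1; rewrite scale1r => e.
rewrite n2 e expr1n !mul1r mulr1 sqrrD.
rewrite lerD2r lerD2l -mulr_natl; have := CS x y; lra.
Qed.

Lemma nlin (f : V -> V) : (forall (a : R[i]) (x y : V), f (a *: x + y) = a *: f x + f y) ->
  [/\ f 0 = 0, (forall x y, f (x + y) = f x + f y), (forall a x, f (a *: x) = a *: f x),
      (forall x, f (- x) = - f x) & (forall x y, f (x - y) = f x - f y)].
Proof.
move=> L.
have f0 : f 0 = 0.
  have := L 1 0 0; rewrite scaler0 addr0 scale1r => e.
  by apply: (addrI (f 0)); rewrite addr0 -e.
have fD x y : f (x + y) = f x + f y by have := L 1 x y; rewrite !scale1r.
have fZ a x : f (a *: x) = a *: f x by have := L a x 0; rewrite !addr0 f0 addr0.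
have fN x : f (- x) = - f x by rewrite -scaleN1r fZ scaleN1r.
by split=> // x y; rewrite fD fN.
Qed.

Lemma adj_lin (T Ts : V -> V) : is_adjoint ip T Ts ->
  forall (a : R[i]) (x y : V), Ts (a *: x + y) = a *: Ts x + Ts y.
Proof.
move=> adj a x y; apply/eqP; rewrite -subr_eq0; apply/eqP; apply: H4.
set d := _ - _.
rewrite {1}/d !ipBr ipDr ipZr -!adj ipDr ipZr.
by rewrite subrr.
Qed.
End IP.

Section Cmod.
Variable R : realType.
Local Notation Re := complex.Re.
Local Notation Im := complex.Im.
Implicit Types c : R[i].
Lemma cmod_ge0 c : 0 <= cmod c. Proof. exact: sqrtr_ge0. Qed.
Lemma Re_le_cmod c : Re c <= cmod c.
Proof.
apply: (le_trans (ler_norm _)); rewrite -sqrtr_sqr; apply: ler_wsqrtr.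
by rewrite lerDl sqr_ge0.
Qed.
Lemma Im_le_cmod c : Im c <= cmod c.
Proof.
apply: (le_trans (ler_norm _)); rewrite -sqrtr_sqr; apply: ler_wsqrtr.
by rewrite lerDr sqr_ge0.
Qed.
Lemma cmod_le c : cmod c <= `|Re c| + `|Im c|.
Proof.
rewrite -(ger0_norm (addr_ge0 (normr_ge0 (Re c)) (normr_ge0 (Im c)))) -sqrtr_sqr.
apply: ler_wsqrtr; rewrite sqrrD !real_normK ?num_real //.
by rewrite -addrA lerD2l lerDr mulrn_wge0 // mulr_ge0.
Qed.
Lemma cmodM (t : R) c : 0 <= t -> cmod (t%:C * c) = t * cmod c.
Proof.
move=> t0; rewrite /cmod ReMr ImMr !exprMn -mulrDr sqrtrM ?sqr_ge0 //.
by rewrite sqrtr_sqr ger0_norm.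
Qed.
End Cmod.

Lemma zid (V : zmodType) (p q r s : V) :
  (p + q + (r + s)) + ((p - q) - (r - s)) = (p + s) + (p + s).
Proof.
rewrite opprB addrACA.
have -> : p + q + (p - q) = p + p by rewrite addrACA subrr addr0.
have -> : r + s + (s - r) = s + s by rewrite [s - r]addrC addrACA subrr add0r.
by rewrite addrACA.
Qed.

Section Main.
Variable R : realType.
Variable V : lmodType R[i].
Variable ip : V -> V -> R[i].
Variables B C Bs Cs : V -> V.
Hypothesis Hip : is_inner_product ip.
Hypothesis HB : is_bounded_op ip B.
Hypothesis HC : is_bounded_op ip C.
Hypothesis aB : is_adjoint ip B Bs.
Hypothesis aC : is_adjoint ip C Cs.
Local Notation Re := complex.Re.
Local Notation Im := complex.Im.
Local Notation n := (ipnorm ip).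
Local Notation nS := (ipnorm (ip_sum ip)).
Local Notation T := (opmx (fun _ => 0) B C (fun _ => 0)).

Let ipDl := ipDl Hip. Let ipZl := ipZl Hip. Let ipNl := ipNl Hip. Let ipBl := ipBl Hip.
Let ipDr := ipDr Hip. Let ipZr := ipZr Hip. Let ipNr := ipNr Hip. Let ipBr := ipBr Hip.
Let ip0l := ip0l Hip. Let ip0r := ip0r Hip. Let Re_sym := Re_sym Hip.
Let n2 := n2 Hip. Let n0 := n0 Hip. Let n_eq0 := n_eq0 Hip. Let ReZZ := ReZZ Hip.
Let nZ := nZ Hip. Let ni := ni Hip. Let CS := CS Hip. Let CSabs := CSabs Hip.
Let CSim := CSim Hip. Let ntri := ntri Hip. Let expand := expand Hip.
Let n_ge0 := @n_ge0 R V ip.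

Let LB : forall (a : R[i]) (x y : V), B (a *: x + y) = a *: B x + B y. Proof. by case: HB. Qed.
Let LC : forall (a : R[i]) (x y : V), C (a *: x + y) = a *: C x + C y. Proof. by case: HC. Qed.
Let LBs := adj_lin Hip aB.
Let LCs := adj_lin Hip aC.

Lemma H3' x : 0 <= Re (ip x x). Proof. by case: Hip => _ _ /(_ x) []. Qed.

Lemma nS2 z : nS z ^+ 2 = n z.1 ^+ 2 + n z.2 ^+ 2.
Proof.
by rewrite /ipnorm sqr_sqrtr /ip_sum ReD ?addr_ge0 ?H3' // -!n2 /ipnorm !sqr_sqrtr ?H3'.
Qed.

Let B0 : B 0 = 0. Proof. by case: (nlin LB). Qed.
Let BZ a x : B (a *: x) = a *: B x. Proof. by case: (nlin LB). Qed.
Let BD x y : B (x + y) = B x + B y. Proof. by case: (nlin LB). Qed.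
Let BB x y : B (x - y) = B x - B y. Proof. by case: (nlin LB). Qed.
Let C0 : C 0 = 0. Proof. by case: (nlin LC). Qed.
Let CZ a x : C (a *: x) = a *: C x. Proof. by case: (nlin LC). Qed.
Let CD x y : C (x + y) = C x + C y. Proof. by case: (nlin LC). Qed.
Let CB x y : C (x - y) = C x - C y. Proof. by case: (nlin LC). Qed.
Let Bs0 : Bs 0 = 0. Proof. by case: (nlin LBs). Qed.
Let BsZ a x : Bs (a *: x) = a *: Bs x. Proof. by case: (nlin LBs). Qed.
Let BsD x y : Bs (x + y) = Bs x + Bs y. Proof. by case: (nlin LBs). Qed.
Let BsB x y : Bs (x - y) = Bs x - Bs y. Proof. by case: (nlin LBs). Qed.
Let Cs0 : Cs 0 = 0. Proof. by case: (nlin LCs). Qed.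
Let CsZ a x : Cs (a *: x) = a *: Cs x. Proof. by case: (nlin LCs). Qed.
Let CsD x y : Cs (x + y) = Cs x + Cs y. Proof. by case: (nlin LCs). Qed.
Let CsB x y : Cs (x - y) = Cs x - Cs y. Proof. by case: (nlin LCs). Qed.

Lemma Tz z : ip_sum ip (T z) z = ip (B z.2) z.1 + ip (C z.1) z.2.
Proof. by rewrite /ip_sum /opmx /= add0r addr0. Qed.

Let S := [set cmod (ip_sum ip (T z) z) | z in [set z | nS z = 1]].
Let w := numrad (ip_sum ip) T.
Lemma wE : w = sup S. Proof. by []. Qed.

Lemma opbnd (A : V -> V) (M : R) : (forall x, n (A x) <= M * n x) ->
  forall x, n x <= 1 -> n (A x) <= `|M|.
Proof.
move=> hA x nx; apply: (le_trans (hA x)); apply: (le_trans (ler_norm _)).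
by rewrite normrM (ger0_norm (n_ge0 x)) ler_piMr.
Qed.

Lemma S_ub : has_ubound S.
Proof.
case: HB => _ [MB hB]; case: HC => _ [MC hC].
exists (2 * (`|MB| + `|MC|)) => _ [[z1 z2] /= nz <-]; rewrite Tz /=.
have e := nS2 (z1, z2); rewrite nz expr1n /= in e.
have q1 := sqr_ge0 (n z1); have q2 := sqr_ge0 (n z2).
have n1 : n z1 <= 1 by apply: sq_le; rewrite ?n_ge0 // expr1n; lra.
have n2' : n z2 <= 1 by apply: sq_le; rewrite ?n_ge0 // expr1n; lra.
have b1 := opbnd hB n2'; have b2 := opbnd hC n1.
have p1 : n (B z2) * n z1 <= `|MB| * 1 by apply: ler_pM; rewrite ?n_ge0.
have p2 : n (C z1) * n z2 <= `|MC| * 1 by apply: ler_pM; rewrite ?n_ge0.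
apply: (le_trans (cmod_le _)); rewrite ReD ImD.
have r1 := CSabs (B z2) z1; have r2 := CSabs (C z1) z2.
have i1 := CSim (B z2) z1; have i2 := CSim (C z1) z2.
have t1 := ler_normD (Re (ip (B z2) z1)) (Re (ip (C z1) z2)).
have t2 := ler_normD (Im (ip (B z2) z1)) (Im (ip (C z1) z2)).
lra.
Qed.

Lemma w_ub z : cmod (ip_sum ip (T z) z) <= w * nS z ^+ 2.
Proof.
case: z => z1 z2; set N := nS (z1, z2).
have [e|ne] := eqVneq N 0.
  have := nS2 (z1, z2); rewrite -/N e expr0n /= => h.
  have q1 := sqr_ge0 (n z1); have q2 := sqr_ge0 (n z2).
  have /eqP : n z1 ^+ 2 = 0 by lra.
  rewrite sqrf_eq0 => /eqP /n_eq0 ->.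
  have /eqP : n z2 ^+ 2 = 0 by lra.
  rewrite sqrf_eq0 => /eqP /n_eq0 ->.
  by rewrite Tz /= B0 C0 ip0l addr0 /cmod /= !expr2 !mul0r addr0 sqrtr0 mulr0.
have Np : 0 < N by rewrite lt0r ne sqrtr_ge0.
set s := N^-1.
have s0 : 0 <= s by rewrite invr_ge0 ltW.
have sN : s * N = 1 by rewrite mulVf.
set c := ip_sum ip (T (z1, z2)) (z1, z2).
set z' := (s%:C *: z1, s%:C *: z2).
have nz' : nS z' = 1.
  have := nS2 (z1, z2); rewrite -/N /= !n2 => h.
  rewrite /ipnorm /ip_sum /= ReD !ReZZ -mulrDr -h.
  by rewrite -exprMn sN expr1n sqrtr1.
have ec : ip_sum ip (T z') z' = s%:C * (s%:C * c).
  rewrite /c !Tz /= BZ CZ !ipZl !ipZr !realJ'.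
  by rewrite !mulrDr.
have Sz : S (s * (s * cmod c)) by exists z' => //; rewrite ec !cmodM.
have H : s * (s * cmod c) <= w.
  by rewrite wE; apply: sup_upper_bound => //; split; [exists (s * (s * cmod c)) | exact: S_ub].
have := ler_wpM2l (sqr_ge0 N) H.
have -> : N ^+ 2 * (s * (s * cmod c)) = cmod c.
  transitivity ((s * N) ^+ 2 * cmod c); first by ring.
  by rewrite sN expr1n mul1r.
by rewrite mulrC.
Qed.

Lemma w_ge0 : 0 <= w.
Proof.
have [[y Sy]|nS0] := pselect (S !=set0).
  apply: (@le_trans _ _ y); last by rewrite wE; apply: sup_upper_bound => //; split; [exists y|exact: S_ub].
  by case: Sy => z _ <-; exact: cmod_ge0.
by move/nonemptyPn: nS0; rewrite wE => ->; rewrite sup0.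
Qed.

Lemma ReA x y : Re (ip (B x + Cs x) y) <= w * (n x ^+ 2 + n y ^+ 2).
Proof.
have := w_ub (y, x); rewrite Tz nS2 /= => h.
have h' := Re_le_cmod (ip (B x) y + ip (C y) x).
have ec : Re (ip (B x) y + ip (C y) x) = Re (ip (B x + Cs x) y).
  by rewrite ReD aC (Re_sym (Cs x) y) ipDl ReD.
rewrite -ec [n x ^+ 2 + _]addrC; exact: le_trans h' h.
Qed.

Lemma ReA' x y : Re (ip (B x - Cs x) y) <= w * (n x ^+ 2 + n y ^+ 2).
Proof.
have := w_ub (y, 'i *: x); rewrite Tz nS2 /= ni => h.
have h' := Im_le_cmod (ip (B ('i *: x)) y + ip (C y) ('i *: x)).
have ec : Im (ip (B ('i *: x)) y + ip (C y) ('i *: x)) = Re (ip (B x - Cs x) y).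
  by rewrite BZ ipZl ipZr ImD ImMi ImMJi aC (Re_sym (Cs x) y) ipBl ReB.
rewrite -ec [n x ^+ 2 + _]addrC; exact: le_trans h' h.
Qed.

Lemma realL (w0 a b : R) : 0 <= w0 -> 0 <= a -> 0 <= b -> b <= 1 ->
  (forall t, 0 < t -> t * a ^+ 2 <= w0 * (b ^+ 2 + (t * a) ^+ 2)) -> a <= 2 * w0.
Proof.
move=> w00 a0 b0 b1 h.
have [->|ne] := eqVneq a 0; first by rewrite mulr_ge0.
have ap : 0 < a by rewrite lt0r ne a0.
have ai : 0 < a^-1 by rewrite invr_gt0.
have := h a^-1 ai.
rewrite mulVf // expr1n (_ : a^-1 * a ^+ 2 = a); last by rewrite expr2 mulrA mulVf // mul1r.
have bb : b ^+ 2 <= 1 by rewrite expr2; nra.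
move=> h1; apply: (le_trans h1); rewrite [2 * w0]mulrC; apply: ler_wpM2l => //; lra.
Qed.

Lemma opb (A : V -> V) : (forall x y, Re (ip (A x) y) <= w * (n x ^+ 2 + n y ^+ 2)) ->
  forall x, n x <= 1 -> n (A x) <= 2 * w.
Proof.
move=> hA x nx; apply: (realL w_ge0 (n_ge0 _) (n_ge0 x) nx) => t t0.
have h1 := hA x (t%:C *: A x); rewrite ipZr realJ' ReMr' -n2 nZ in h1; [exact: h1 | exact: ltW].
Qed.

Lemma op_props (A : V -> V) (M : R) : (forall x, n x <= 1 -> n (A x) <= M) ->
  [/\ opnorm ip A <= M, 0 <= opnorm ip A & forall x, n x <= 1 -> n (A x) <= opnorm ip A].
Proof.
move=> hM.
have ne : [set n (A x) | x in [set x | n x <= 1]] !=set0.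
  by exists (n (A 0)); exists 0 => //=; rewrite n0 ler01.
have ub : ubound [set n (A x) | x in [set x | n x <= 1]] M by move=> _ [x hx <-]; exact: hM.
have hs : has_sup [set n (A x) | x in [set x | n x <= 1]] by split => //; exists M.
have sb x : n x <= 1 -> n (A x) <= opnorm ip A.
  by move=> hx; apply: sup_upper_bound => //; exists x.
split => //; first exact: ge_sup.
by apply: le_trans (n_ge0 (A 0)) (sb 0 _); rewrite n0 ler01.
Qed.

Lemma op_hom (A : V -> V) (h : R) : A 0 = 0 ->
  (forall (t : R) z, A (t%:C *: z) = t%:C *: A z) -> 0 <= h ->
  (forall x, n x <= 1 -> n (A x) <= h) -> forall z, n (A z) <= h * n z.
Proof.
move=> A0 AZ h0 hb z.
have [/n_eq0 ->|ne] := eqVneq (n z) 0; first by rewrite A0 n0 mulr0.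
have Np : 0 < n z by rewrite lt0r ne n_ge0.
set s := (n z)^-1.
have s0 : 0 <= s by rewrite invr_ge0 ltW.
have := hb (s%:C *: z); rewrite AZ !nZ // mulVf // => /(_ (lexx _)) H.
have := ler_wpM2l (n_ge0 z) H.
rewrite mulrA mulfV // mul1r mulrC //.
Qed.

Lemma sq_le2 (a c : R) : 0 <= a -> 0 <= c -> a ^+ 2 <= a * c -> a <= c.
Proof. move=> a0 c0 h; nra. Qed.

Lemma adjb (A As : V -> V) (h : R) : 0 <= h -> (forall z, n (A z) <= h * n z) ->
  (forall y z, Re (ip (As y) z) = Re (ip (A z) y)) -> forall y, n (As y) <= h * n y.
Proof.
move=> h0 hA e y; apply: sq_le2; rewrite ?mulr_ge0 ?n_ge0 //.
rewrite n2 e; apply: (le_trans (CS _ _)).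
have := ler_wpM2r (n_ge0 y) (hA (As y)).
have -> : n (As y) * (h * n y) = h * n (As y) * n y by ring.
by [].
Qed.

Lemma n2x W : n (W + W) = 2 * n W.
Proof.
have e : n (W + W) ^+ 2 = (2 * n W) ^+ 2.
  by rewrite [LHS]n2 -{1 3}[W]scale1r !scale1r -[W + W](congr1 (fun v => W + v) (scale1r W)) expand -n2; ring.
by apply/le_anti/andP; split; apply: sq_le; rewrite ?e ?n_ge0 ?mulr_ge0 ?n_ge0.
Qed.

Let h := opnorm ip (fun x => B x + Cs x).
Let k := opnorm ip (fun x => B x - Cs x).

Lemma hp : [/\ h <= 2 * w, 0 <= h & forall x, n x <= 1 -> n (B x + Cs x) <= h].
Proof. exact: (op_props (A := fun x => B x + Cs x) (opb (A := fun x => B x + Cs x) ReA)). Qed.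
Lemma kp : [/\ k <= 2 * w, 0 <= k & forall x, n x <= 1 -> n (B x - Cs x) <= k].
Proof. exact: (op_props (A := fun x => B x - Cs x) (opb (A := fun x => B x - Cs x) ReA')). Qed.

Lemma hhom z : n (B z + Cs z) <= h * n z.
Proof.
case: hp => _ h0 hb.
apply: (op_hom (A := fun x => B x + Cs x)) => //=; first by rewrite B0 Cs0 addr0.
by move=> t y; rewrite BZ CsZ scalerDr.
Qed.
Lemma khom z : n (B z - Cs z) <= k * n z.
Proof.
case: kp => _ k0 kb.
apply: (op_hom (A := fun x => B x - Cs x)) => //=; first by rewrite B0 Cs0 subr0.
by move=> t y; rewrite BZ CsZ scalerBr.
Qed.

Lemma adjh y : n (Bs y + C y) <= h * n y.
Proof.
case: hp => _ h0 _.
apply: (adjb (A := fun x => B x + Cs x) (As := fun x => Bs x + C x)) => //; first exact: hhom.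
move=> {}y z /=.
by rewrite !ipDl !ReD (Re_sym z (Bs y)) -aB aC (Re_sym (Cs z) y).
Qed.
Lemma adjk y : n (Bs y - C y) <= k * n y.
Proof.
case: kp => _ k0 _.
apply: (adjb (A := fun x => B x - Cs x) (As := fun x => Bs x - C x)) => //; first exact: khom.
move=> {}y z /=.
by rewrite !ipBl !ReB (Re_sym z (Bs y)) -aB aC (Re_sym (Cs z) y).
Qed.

Lemma P1b x : n x <= 1 -> 2 * n (Bs (B x) + C (Cs x)) <= h ^+ 2 + k ^+ 2.
Proof.
move=> nx.
have E : (Bs (B x + Cs x) + C (B x + Cs x)) + (Bs (B x - Cs x) - C (B x - Cs x)) =
   (Bs (B x) + C (Cs x)) + (Bs (B x) + C (Cs x)) by rewrite BsD CD BsB CB zid.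
rewrite -n2x -E; apply: le_trans (ntri _ _) _.
case: hp => _ h0 hb; case: kp => _ k0 kb.
have a1 := adjh (B x + Cs x); have a2 := adjk (B x - Cs x).
have q1 := ler_wpM2l h0 (hb x nx); have q2 := ler_wpM2l k0 (kb x nx).
rewrite !expr2; lra.
Qed.

Lemma P2b y : n y <= 1 -> 2 * n (B (Bs y) + Cs (C y)) <= h ^+ 2 + k ^+ 2.
Proof.
move=> ny.
have E : (B (Bs y + C y) + Cs (Bs y + C y)) + (B (Bs y - C y) - Cs (Bs y - C y)) =
   (B (Bs y) + Cs (C y)) + (B (Bs y) + Cs (C y)) by rewrite BD CsD BB CsB zid.
rewrite -n2x -E; apply: le_trans (ntri _ _) _.
case: hp => _ h0 hb; case: kp => _ k0 kb.
have a1 := hhom (Bs y + C y); have a2 := khom (Bs y - C y).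
have b1 := adjh y; have b2 := adjk y.
have c1 : h * n y <= h by rewrite ler_piMr.
have c2 : k * n y <= k by rewrite ler_piMr.
have q1 := ler_wpM2l h0 (le_trans b1 c1); have q2 := ler_wpM2l k0 (le_trans b2 c2).
rewrite !expr2; lra.
Qed.

Lemma final : w ^+ 2 = 4^-1 * Num.max (opnorm ip (fun x => Bs (B x) + C (Cs x)))
                   (opnorm ip (fun x => B (Bs x) + Cs (C x))) -> h = k.
Proof.
move=> e.
set M := (h ^+ 2 + k ^+ 2) / 2.
have [o1 _ _] := op_props (A := fun x => Bs (B x) + C (Cs x)) (M := M)
  (fun x nx => ltac:(have := P1b nx; rewrite /M; lra)).
have [o2 _ _] := op_props (A := fun x => B (Bs x) + Cs (C x)) (M := M)
  (fun x nx => ltac:(have := P2b nx; rewrite /M; lra)).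
have mx : Num.max (opnorm ip (fun x => Bs (B x) + C (Cs x)))
                   (opnorm ip (fun x => B (Bs x) + Cs (C x))) <= M by rewrite ge_max o1 o2.
case: hp => h2 h0 _; case: kp => k2 k0 _.
have w0 := w_ge0.
have hh : h ^+ 2 <= 4 * w ^+ 2 by rewrite !expr2; nra.
have kk : k ^+ 2 <= 4 * w ^+ 2 by rewrite !expr2; nra.
have e2 : h ^+ 2 = k ^+ 2 by move: mx; rewrite /M; lra.
by apply/le_anti/andP; split; apply: sq_le; rewrite ?e2.
Qed.

End Main.

Theorem mainTheorem5 (R : realType) (V : lmodType R[i]) (ip : V -> V -> R[i])
  (B C Bs Cs : V -> V) :
  is_complex_Hilbert ip ->
  is_bounded_op ip B -> is_bounded_op ip C ->
  is_adjoint ip B Bs -> is_adjoint ip C Cs ->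
  numrad (ip_sum ip) (opmx (fun _ => 0) B C (fun _ => 0)) ^+ 2 =
    4^-1 * Num.max (opnorm ip (fun x => Bs (B x) + C (Cs x)))
                   (opnorm ip (fun x => B (Bs x) + Cs (C x))) ->
  opnorm ip (fun x => B x + Cs x) = opnorm ip (fun x => B x - Cs x).
Proof.
move=> [Hip _] HB HC aB aC e.
exact: (final Hip HB HC aB aC e).
Qed.
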